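(* Let $N\ge2$. For an integer $M\ge1$ and $q\in[0,1]^M$ say that $q$ satisfies $(E_M)$ if $M+(d^2-1)\sum_{i=1}^Mq_i=d(d-1)+\frac{(\sum_{i=1}^M\sqrt{(d^2-1)q_i+1})^2}{M+d-1}$. Let $p\in[0,1]^{N-1}$ satisfy $(E_{N-1})$. Then $(p,0)\in[0,1]^N$ satisfies $(E_N)$ if and only if $p=e_i$ for some $1\le i\le N-1$, where $e_i$ is the $i$-th standard basis vector of $\mathbb R^{N-1}$.
   Context: $d\ge2$ is an integer (the Hilbert space dimension). *)

(* Defs.v *)
From HB Require Import structures.
From mathcomp Require Import all_boot all_order all_algebra.
From mathcomp Require Import reals.
Set Implicit Arguments. Unset Strict Implicit. Unset Printing Implicit Defensive.
Import Order.TTheory GRing.Theory Num.Theory.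
Local Open Scope ring_scope.

Definition in_unit_cube (R : realType) (M : nat) (q : 'I_M -> R) : Prop :=
  forall i, 0 <= q i <= 1.

Definition condE (R : realType) (d M : nat) (q : 'I_M -> R) : Prop :=
  M%:R + (d%:R ^+ 2 - 1) * (\sum_(i < M) q i)
  = d%:R * (d%:R - 1)
    + (\sum_(i < M) Num.sqrt ((d%:R ^+ 2 - 1) * q i + 1)) ^+ 2
      / (M + d - 1)%:R.

(* (p, 0) : the vector of length n+1 obtained by appending a zero to p *)
Definition ext0 (R : realType) (n : nat) (p : 'I_n -> R) : 'I_n.+1 -> R :=
  fun j => match unlift ord_max j with Some k => p k | None => 0 end.

Definition std_basis (R : realType) (n : nat) (i : 'I_n) : 'I_n -> R :=
  fun j => (j == i)%:R.

(* Main.v *)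
Require Import Defs.
From HB Require Import structures.
From mathcomp Require Import all_boot all_order all_algebra.
From mathcomp Require Import reals.
From mathcomp Require Import lra zify ring.
Import Order.TTheory GRing.Theory Num.Theory.
Local Open Scope ring_scope.
Lemma sum_ext0 (R : realType) n (p : 'I_n -> R) (F : R -> R) :
  \sum_(j < n.+1) F (ext0 p j) = \sum_(i < n) F (p i) + F 0.
Proof.
rewrite big_ord_recr /=; congr (_ + _).
  apply: eq_bigr => i _; rewrite /ext0.
  have -> : widen_ord (leqnSn n) i = lift ord_max i.
    by apply/val_inj; rewrite /= /bump leqNgt ltn_ord.
  by rewrite liftK.
by rewrite /ext0 unlift_none.
Qed.

Lemma keyE (R : realType) (m X c S K : R) : 0 < K ->
  m + X = c + S ^+ 2 / K ->
  (m + 1 + X = c + (S + 1) ^+ 2 / (K + 1) <-> S = K).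
Proof.
move=> K0 E.
have K1 : K + 1 != 0 by rewrite gt_eqF // ltr_wpDr.
have K0' : K != 0 by rewrite gt_eqF.
have hu : S ^+ 2 / K * K = S ^+ 2 by rewrite divfK.
have hv : (S + 1) ^+ 2 / (K + 1) * (K + 1) = (S + 1) ^+ 2 by rewrite divfK.
split => [Ep|SK].
  set u := S ^+ 2 / K in E hu; set v := (S + 1) ^+ 2 / (K + 1) in Ep hv.
  have uv : v = u + 1 by lra.
  have : (S - K) ^+ 2 == 0.
    apply/eqP; rewrite uv in hv; nra.
  by rewrite sqrf_eq0 subr_eq0 => /eqP.
have h1 : K ^+ 2 / K = K by rewrite expr2 mulfK.
have h2 : (K + 1) ^+ 2 / (K + 1) = K + 1 by rewrite expr2 mulfK.
rewrite SK h1 in E; rewrite SK h2; lra.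
Qed.

Theorem mainTheorem17 (R : realType) (d n : nat) (hd : (2 <= d)%N)
  (hN : (2 <= n.+1)%N) (p : 'I_n -> R) :
  in_unit_cube p -> condE d p ->
  (condE d (ext0 p) <-> exists i : 'I_n, forall j, p j = std_basis R i j).
Proof.
move=> hcube E.
have d2 : (2:R) <= d%:R by rewrite (ler_nat R 2 d).
set D : R := d%:R ^+ 2 - 1.
have D0 : 0 < D by rewrite /D; nra.
have hK1 : ((n + d - 1)%:R : R) + 1 = n%:R + d%:R.
  by rewrite natr1 -natrD; congr _%:R; lia.
have hK2 : ((n.+1 + d - 1)%:R : R) = ((n + d - 1)%:R : R) + 1.
  by rewrite natr1; congr _%:R; lia.
set K : R := (n + d - 1)%:R in hK1 hK2.
have K0 : 0 < K by rewrite /K ltr0n; lia.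
set a := fun i => Num.sqrt (D * p i + 1).
have ha2 : forall i, a i ^+ 2 = D * p i + 1.
  move=> i; rewrite /a sqr_sqrtr //; have := hcube i; case/andP => h0 h1; nra.
have ha1 : forall i, 1 <= a i <= d%:R.
  move=> i; have := hcube i; case/andP => h0 h1; apply/andP; split.
    rewrite /a -{1}sqrtr1 ler_sqrt; nra.
  have hD1 : d%:R ^+ 2 = D + 1 by rewrite /D subrK.
  rewrite /a -(ger0_norm (ler0n R d)) -sqrtr_sqr ler_sqrt ?sqr_ge0 // hD1; nra.
have E' : n%:R + D * \sum_(i < n) p i = d%:R * (d%:R - 1) + (\sum_i a i) ^+ 2 / K
  by exact: E.
have keq : condE d (ext0 p) <-> \sum_i a i = K.
  rewrite -(keyE _ _ _ _ _ _ K0 E').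
  rewrite /condE (sum_ext0 _ _ p id) (sum_ext0 _ _ p (fun x => Num.sqrt (D * x + 1))) /=.
  by rewrite mulr0 add0r sqrtr1 addr0 hK2 -natr1 -/D.
rewrite keq.
have hD1 : d%:R ^+ 2 = D + 1 by rewrite /D subrK.
have hsa2 : \sum_i a i ^+ 2 = D * \sum_(i < n) p i + n%:R.
  rewrite (eq_bigr _ (fun i _ => ha2 i)) big_split /= -mulr_sumr.
  by rewrite sumr_const card_ord -[in RHS](mulr1 n%:R) mulr_natl.
have hsb : \sum_i (a i - 1) = \sum_i a i - n%:R.
  by rewrite sumrB sumr_const card_ord -[in RHS](mulr1 n%:R) mulr_natl.
split => [SK|[i hi]].
  have hsq : \sum_i (a i - 1) * (d%:R - a i) = 0.
    transitivity ((d%:R + 1) * \sum_i a i - \sum_i a i ^+ 2 - d%:R * n%:R).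
      have hdn : \sum_(i < n) (d%:R : R) = d%:R * n%:R.
        by rewrite sumr_const card_ord mulr_natr.
      rewrite mulr_sumr -hdn -!sumrB; apply: eq_bigr => i _; ring.
    rewrite hsa2 SK; rewrite SK in E'.
    have h1 : K ^+ 2 / K = K by rewrite expr2 mulfK // gt_eqF.
    rewrite h1 in E'.
    have hX : D * \sum_(i < n) p i = d%:R * (d%:R - 1) + K - n%:R by lra.
    have hK : K = n%:R + d%:R - 1 by lra.
    rewrite hX hK; ring.
  have hz : forall i, (a i - 1) * (d%:R - a i) = 0.
    move=> i; apply: (psumr_eq0P _ hsq) => // k _; have /andP[h1 h2] := ha1 k.
    by apply: mulr_ge0; rewrite subr_ge0.
  have [i hi] : exists i, a i != 1.
    case: (pickP (fun i => a i != 1)) => [i hi|h]; first by exists i.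
    have : \sum_i (a i - 1) = 0.
      by apply: big1 => i _; move: (h i) => /negbFE/eqP ->; rewrite subrr.
    rewrite hsb SK. lra.
  have DN0 : D != 0 by rewrite gt_eqF.
  have aid : a i = d%:R.
    have := hz i; move/eqP; rewrite mulf_eq0 !subr_eq0 (negbTE hi) /=.
    by move/eqP.
  have hrest : \sum_(j | j != i) (a j - 1) = 0.
    move: hsb; rewrite (bigD1 i) //= SK aid; lra.
  have hj : forall j, j != i -> a j = 1.
    move=> j ji; apply/eqP; rewrite -subr_eq0; apply/eqP.
    apply: (psumr_eq0P _ hrest) => // k _; have /andP[h1 h2] := ha1 k.
    by rewrite subr_ge0.
  exists i => j; rewrite /std_basis; case: eqVneq => [->|hji] /=.
    have := ha2 i; rewrite aid hD1 => h.
    apply: (mulfI DN0); rewrite mulr1; lra.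
  have := ha2 j; rewrite (hj j hji) expr1n => h.
  have /eqP : D * p j = 0 by lra.
  by rewrite mulf_eq0 (negbTE DN0) /= => /eqP.
have haj : forall j, a j - 1 = (d%:R - 1) * (j == i)%:R.
  move=> j; rewrite /a hi /std_basis; case: eqVneq => _ /=.
    by rewrite !mulr1 -hD1 sqrtr_sqr ger0_norm ?ler0n.
  by rewrite !mulr0 add0r sqrtr1 subrr.
have : \sum_j (a j - 1) = d%:R - 1.
  rewrite (eq_bigr _ (fun j _ => haj j)) (bigD1 i) //= eqxx mulr1 big1 ?addr0 //.
  by move=> j /negbTE ->; rewrite mulr0.
rewrite hsb; lra.
Qed.
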